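(* Suppose the following holds: for every polynomial $f(t)=1+\sum_{i=1}^{d}f_{i-1}t^i$ with positive integer coefficients and only real roots, with recursive decomposition $f(t)=g(t)+t\,h(t)$, $g(t)=1+\sum_{i=1}^{d}g_it^i$, $h(t)=1+\sum_{i=1}^{d-1}h_it^i$, one has $h_i\le g_i$ for all $1\le i\le d-1$. Then every polynomial $1+\sum_{i=1}^{d}f_{i-1}t^i$ with positive integer coefficients and only real roots is the $f$-polynomial of a simplicial complex.
   Context: For positive integers $m,i$, the $i$-th binomial expansion of $m$ is the unique representation $m=\binom{a_i}{i}+\binom{a_{i-1}}{i-1}+\cdots+\binom{a_j}{j}$ with $a_i>\cdots>a_j\ge j\ge1$. Recursive decomposition: for $f(t)=1+\sum_{i=1}^d f_{i-1}t^i$ with positive integer coefficients and, for each $1\le i\le d$, the $i$-th binomial expansion $f_{i-1}=\binom{a_i}{i}+\cdots+\binom{a_j}{j}$, set $g_i=\binom{a_i-1}{i}+\binom{a_{i-1}-1}{i-1}+\cdots+\binom{a_j-1}{j}$ and $h_{i-1}=\binom{a_i-1}{i-1}+\binom{a_{i-1}-1}{i-2}+\cdots+\binom{a_j-1}{j-1}$ (so $h_0=1$ and $f_{i-1}=g_i+h_{i-1}$); then $f(t)=g(t)+t\,h(t)$ with $g(t)=1+\sum_{i=1}^d g_it^i$, $h(t)=1+\sum_{i=1}^{d-1}h_it^i$. The $f$-polynomial of a $(d-1)$-dimensional simplicial complex $\Delta$ is $\sum_{i=0}^{d}f_{i-1}t^i$, where $f_i$ is the number of faces of cardinality $i+1$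 and $f_{-1}=1$. *)

(* Defs.v *)
From HB Require Import structures.
From mathcomp Require Import all_boot all_order all_algebra algC.
Set Implicit Arguments. Unset Strict Implicit. Unset Printing Implicit Defensive.
Import Order.TTheory GRing.Theory Num.Theory.

(* Convention: a polynomial f(t) = 1 + sum_{i=1}^d f_{i-1} t^i is encoded by
   d and a : nat -> nat with a k = coefficient of t^k, i.e. a i = f_{i-1};
   only a 0 .. a d are used, and a 0 = 1 is required. *)

Definition fpoly (d : nat) (a : nat -> nat) : {poly algC} :=
  \poly_(k < d.+1) ((a k)%:R)%R.

Definition pos_coeffs (d : nat) (a : nat -> nat) : Prop :=
  a 0 = 1 /\ forall i, 1 <= i <= d -> 0 < a i.

Definition real_rooted (p : {poly algC}) : Prop :=
  forall z : algC, root p z -> z \is Num.real.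

(* s = [:: a_i; a_{i-1}; ...; a_j] is the i-th binomial expansion of m:
   m = C(a_i,i) + ... + C(a_j,j), a_i > ... > a_j >= j >= 1,
   where j = i - size s + 1. *)
Definition binom_exp (i m : nat) (s : seq nat) : Prop :=
  [/\ 0 < size s <= i,
      sorted (fun x y => y < x) s,
      (i - size s).+1 <= last 0 s &
      m = \sum_(k < size s) 'C(nth 0 s k, i - k)].

Definition gpart (i : nat) (s : seq nat) : nat :=
  \sum_(k < size s) 'C((nth 0 s k).-1, i - k).

Definition hpart (i : nat) (s : seq nat) : nat :=
  \sum_(k < size s) 'C((nth 0 s k).-1, (i - k).-1).

Definition rec_decomp (d : nat) (a g h : nat -> nat) : Prop :=
  g 0 = 1 /\ h 0 = 1 /\
  forall i, 1 <= i <= d ->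
    exists s, [/\ binom_exp i (a i) s, g i = gpart i s & h i.-1 = hpart i s].

Definition simplicial_complex (n : nat) (D : {set {set 'I_n}}) : Prop :=
  set0 \in D /\ forall F G : {set 'I_n}, F \in D -> G \subset F -> G \in D.

Definition is_f_polynomial (d : nat) (a : nat -> nat) : Prop :=
  exists n (D : {set {set 'I_n}}), simplicial_complex D /\
    forall k, #|[set F in D | #|F| == k]| = (if k <= d then a k else 0).

(* Main.v *)
Require Import Defs.
From mathcomp Require Import all_boot all_order all_algebra algC.
From mathcomp Require Import zify.
Set Implicit Arguments. Unset Strict Implicit. Unset Printing Implicit Defensive.

Definition rk {n} (o : nat) (F : {set 'I_n}) : nat :=
  \sum_(x in F) 'C(x, #|[set y in F | y <= x]| + o).

Lemma rk0set n o : rk o (set0 : {set 'I_n}) = 0.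
Proof. by rewrite /rk big_set0. Qed.

Lemma setmax n (G : {set 'I_n}) : G != set0 ->
  exists2 m, m \in G & forall y, y \in G -> y <= m.
Proof.
case/set0Pn => x0 Hx0.
case: (@arg_maxnP _ x0 (fun i => i \in G) (fun i => nat_of_ord i) Hx0) => m Hm Hmax.
by exists m.
Qed.

Lemma rk_max n o (F : {set 'I_n}) m : m \in F -> (forall y, y \in F -> y <= m) ->
  rk o F = 'C(m, #|F| + o) + rk o (F :\ m).
Proof.
move=> mF Hm; rewrite /rk (bigD1 m) //=; congr (_ + _).
  congr 'C(_, _ + o); apply: eq_card => y; rewrite !inE.
  by case: (boolP (y \in F)) => //= /Hm ->.
apply: eq_big => [x|x /andP[xF xm]]; first by rewrite !inE andbC.
congr 'C(_, _ + o); apply: eq_card => y; rewrite !inE.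
case: (eqVneq y m) => [->|] //=.
have xm' : (x : nat) != m by [].
have := Hm x xF; rewrite andbC; case: (m <= x) / idP => //= mx xm2.
by exfalso; move: xm'; rewrite eqn_leq mx xm2.
Qed.

Lemma rk_lt n o (G : {set 'I_n}) b : (forall y, y \in G -> y < b) ->
  (forall y, y \in G -> o <= y) -> o <= b -> rk o G < 'C(b, #|G| + o).
Proof.
move Hk: #|G| => k; elim: k G Hk b => [|k IH] G Hk b Hb Ho ob.
  move/eqP: Hk; rewrite cards_eq0 => /eqP ->.
  by rewrite rk0set bin_gt0.
have [m mG Hm] : exists2 m, m \in G & forall y, y \in G -> y <= m.
  by apply: setmax; rewrite -card_gt0 Hk.
rewrite (rk_max o mG Hm).
have Hk' : #|G :\ m| = k by move: (cardsD1 m G); rewrite mG Hk add1n => -[].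
have := IH (G :\ m) Hk' m.
have H1 : forall y, y \in G :\ m -> y < m.
  move=> y; rewrite !inE => /andP[ym yG]; rewrite ltn_neqAle Hm // andbT.
  by [].
have H2 : forall y, y \in G :\ m -> o <= y by move=> y; rewrite !inE => /andP[_ /Ho].
move=> /(_ H1 H2 (Ho m mG)) Hlt.
apply: (@leq_trans ('C(m.+1, k.+1 + o))); last by apply: leq_bin2l; exact: Hb.
by rewrite addSn binS Hk addSn ltn_add2l.
Qed.

Lemma rk_elems n (F : {set 'I_n}) b : rk 0 F < 'C(b, #|F|) -> forall y, y \in F -> y < b.
Proof.
move=> H y yF.
have [m mF Hm] : exists2 m, m \in F & forall y, y \in F -> y <= m.
  by apply: setmax; apply/set0Pn; exists y.
move: H; rewrite (rk_max 0 mF Hm) addn0 => H.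
apply: (leq_ltn_trans (Hm y yF)); rewrite ltnNge; apply/negP => bm.
have := leq_bin2l #|F| bm; move: H; lia.
Qed.

Lemma rk_cmp n k (T T' : {set 'I_n}) : #|T| = k -> #|T'| = k ->
  (forall y, y \in T -> 0 < y) -> (forall y, y \in T' -> 0 < y) ->
  rk 1 T' < rk 1 T -> rk 0 T' < rk 0 T.
Proof.
elim: k T T' => [|k IH] T T' Hk Hk' P P' H.
  move/eqP: Hk; rewrite cards_eq0 => /eqP HT; move: H; rewrite HT rk0set //.
have [m mT Hm] : exists2 m, m \in T & forall y, y \in T -> y <= m.
  by apply: setmax; rewrite -card_gt0 Hk.
have [m' mT' Hm'] : exists2 m, m \in T' & forall y, y \in T' -> y <= m.
  by apply: setmax; rewrite -card_gt0 Hk'.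
have DT : forall o, rk o T = 'C(m, k.+1 + o) + rk o (T :\ m).
  by move=> o; rewrite (rk_max o mT Hm) Hk.
have DT' : forall o, rk o T' = 'C(m', k.+1 + o) + rk o (T' :\ m').
  by move=> o; rewrite (rk_max o mT' Hm') Hk'.
case: (ltngtP m m') => [lt|lt|eq].
- exfalso.
  have h1 := @rk_lt n 1 T m.+1 (fun y yT => Hm y yT) P isT.
  have h2 := leq_bin2l (#|T| + 1) lt.
  move: H; rewrite DT' Hk in h1 h2 *; lia.
- have h1 := @rk_lt n 0 T' m'.+1 (fun y yT => Hm' y yT) (fun y _ => isT) isT.
  have h2 := leq_bin2l (#|T'| + 0) lt.
  rewrite DT; move: h1 h2; rewrite Hk'; lia.
- have em : m = m' by apply: val_inj.
  subst m'.
  have Hk1 : #|T :\ m| = k by move: (cardsD1 m T); rewrite mT Hk add1n => -[].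
  have Hk1' : #|T' :\ m| = k by move: (cardsD1 m T'); rewrite mT' Hk' add1n => -[].
  rewrite DT DT' ltn_add2l; apply: IH => //.
  - by move=> y; rewrite !inE => /andP[_ /P].
  - by move=> y; rewrite !inE => /andP[_ /P'].
  by move: H; rewrite DT DT' ltn_add2l.
Qed.

Lemma rk_del n (F : {set 'I_n}) x : (forall y, y \in F -> 0 < y) -> x \in F ->
  rk 1 (F :\ x) <= rk 0 F.
Proof.
move Hk: #|F| => k; elim: k F Hk x => [|k IH] F Hk x P xF.
  by move/eqP: Hk; rewrite cards_eq0 => /eqP HF; rewrite HF inE in xF.
have [m mF Hm] : exists2 m, m \in F & forall y, y \in F -> y <= m.
  by apply: setmax; apply/set0Pn; exists x.
have Hk1 : #|F :\ m| = k by move: (cardsD1 m F); rewrite mF Hk add1n => -[].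
rewrite (rk_max 0 mF Hm) Hk addn0.
case: (eqVneq x m) => [->|xm].
  apply: ltnW; apply: (leq_trans (@rk_lt n 1 (F :\ m) m _ _ _)).
  - move=> y; rewrite !inE => /andP[ym yF]; rewrite ltn_neqAle Hm // andbT; by [].
  - by move=> y; rewrite !inE => /andP[_ /P].
  - exact: P.
  - by rewrite Hk1 addn1 leq_addr.
have mFx : m \in F :\ x by rewrite !inE eq_sym xm.
have Hmx : forall y, y \in F :\ x -> y <= m by move=> y; rewrite !inE => /andP[_ /Hm].
have Hk2 : #|F :\ x| = k by move: (cardsD1 x F); rewrite xF Hk add1n => -[].
rewrite (rk_max 1 mFx Hmx) Hk2 addn1 leq_add2l.
have -> : F :\ x :\ m = F :\ m :\ x.
  by apply/setP => y; rewrite !inE; case: (y == x); case: (y == m).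
apply: IH => //.
- by move=> y; rewrite !inE => /andP[_ /P].
by rewrite !inE xm.
Qed.

Lemma rk_add0 n (T : {set 'I_n.+1}) : ord0 \notin T -> rk 0 (ord0 |: T) = rk 1 T.
Proof.
move=> T0; rewrite /rk big_setU1 //= bin0n.
have -> : (#|[set y in ord0 |: T | y <= @ord0 n]| + 0 == 0) = false.
  rewrite addn0; apply/negbTE; rewrite -lt0n card_gt0; apply/set0Pn; exists ord0.
  by rewrite !inE eqxx.
rewrite add0n; apply: eq_bigr => x xT; congr 'C(_, _).
have -> : [set y in ord0 |: T | y <= x] = ord0 |: [set y in T | y <= x].
  apply/setP => y; rewrite !inE; case: (eqVneq y ord0) => [->|] //=.
by rewrite cardsU1 inE (negbTE T0) addn0 add1n addn1.
Qed.

Definition rkp (p : nat) (s : seq nat) : nat := \sum_(k < size s) 'C(nth 0 s k, p - k).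

Definition Valid (p : nat) (s : seq nat) : Prop :=
  [/\ sorted (fun x y => y < x) s, size s <= p & (s != [::] -> (p - size s).+1 <= last 0 s)].

Lemma rkp_cons p x s : rkp p (x :: s) = 'C(x, p) + rkp p.-1 s.
Proof.
rewrite /rkp big_ord_recl /= subn0; congr (_ + _); apply: eq_bigr => k _.
rewrite /=; congr 'C(_, _); rewrite /bump leq0n /=; move: (nat_of_ord k) => j; lia.
Qed.

Lemma rkp_nil p : rkp p [::] = 0.
Proof. by rewrite /rkp big_ord0. Qed.

Lemma Valid_tail p x s : Valid p (x :: s) -> Valid p.-1 s.
Proof.
case=> /= Hs Hsz Hl; split.
- by move: Hs; clear; case: s => //= y s /andP[].
- lia.
move: Hs Hsz Hl; case: s => //= y s _ Hsz Hl _.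
have := Hl isT; rewrite /=; move=> H; apply: leq_trans H; lia.
Qed.

Lemma last_le x s : path (fun x y => y < x) x s -> last x s <= x.
Proof.
elim: s x => //= y s IH x /andP[yx Hp]; apply: leq_trans (IH _ Hp) _; exact: ltnW.
Qed.

Lemma mem_ge_last x s : path (fun x y => y < x) x s -> forall y, y \in x :: s -> last x s <= y.
Proof.
elim: s x => [|z s IH] x /=; first by move=> _ y; rewrite inE => /eqP ->.
move=> /andP[zx Hp] y; rewrite inE => /orP[/eqP ->|ys].
  apply: leq_trans (last_le Hp) _; exact: ltnW.
exact: IH.
Qed.

Lemma Valid_pos p s : Valid p s -> forall y, y \in s -> 0 < y.
Proof.
case: s => // x s [Hs Hsz Hl] y ys.
have := mem_ge_last Hs ys; have := Hl isT; rewrite /=; lia.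
Qed.

Lemma Valid_p p x s : Valid p (x :: s) -> 0 < p.
Proof. by case=> _ /=; lia. Qed.

Lemma Valid_TB p x s : Valid p (x :: s) -> rkp p.-1 s < 'C(x, p.-1).
Proof.
elim: s x p => [|y s IH] x p HV.
  by rewrite rkp_nil bin_gt0; case: HV => _ _ /(_ isT) /=; lia.
have HV' := Valid_tail HV.
have Hyx : y < x by case: HV => /= /andP[].
have := IH _ _ HV'; rewrite rkp_cons => H.
have Hp : 1 < p by case: HV => _ /=; lia.
have := leq_bin2l p.-1 Hyx.
have -> : p.-1 = (p.-2).+1 by lia.
rewrite binS /=; lia.
Qed.

Lemma bin_big n i : n.+1 <= 'C(n + i.+1, i.+1).
Proof.
elim: i => [|i IH]; first by rewrite addn1 bin1.
rewrite addnS binS; apply: leq_trans IH _; exact: leq_addl.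
Qed.

Lemma exp_ex i m : {s | 0 < i -> 0 < m -> 
  [/\ 0 < size s <= i, sorted (fun x y => y < x) s,
      (i - size s).+1 <= last 0 s & m = \sum_(k < size s) 'C(nth 0 s k, i - k)]}.
Proof.
elim: i m => [|i IH] m; first by exists [::].
case: (posnP m) => [->|m0]; first by exists [::].
have exP : exists x, m < 'C(x.+1, i.+1) by exists (m + i); rewrite -addnS; exact: bin_big.
case: (ex_minnP exP) => x0 Hx0 Hmin.
have Hle : 'C(x0, i.+1) <= m.
  case: x0 Hx0 Hmin => [|x] _ Hmin; first by rewrite bin0n.
  rewrite leqNgt; apply/negP => /Hmin; lia.
have Hx0i : i.+1 <= x0.
  rewrite leqNgt; apply/negP => Hlt.
  have : 'C(x0.+1, i.+1) <= 1.
    case: (ltngtP x0.+1 i.+1) => [h|h|->]; first by rewrite bin_small.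
    - lia.
    - by rewrite binn.
  lia.
set r := m - 'C(x0, i.+1).
have Hr : r < 'C(x0, i) by move: Hx0; rewrite binS /r; lia.
case: (posnP r) => [r0|rpos].
  exists [:: x0] => _ _; split => //=.
  - by rewrite subSS subn0.
  - by rewrite big_ord_recl big_ord0 /= subn0 addn0; move: r0 Hle; rewrite /r; lia.
have i0 : 0 < i by move: Hr rpos; case: (i) => [|i']; rewrite ?bin0; lia.
case: (IH r) => s' Hs'.
case: (Hs' i0 rpos) => /andP[sz0 szi] Hsort Hlast Hsum; clear Hs'.
exists (x0 :: s') => _ _; split.
- by rewrite /= ltnS szi.
- case: s' sz0 szi Hsort Hlast Hsum => // y s' _ _ Hsort _ Hsum /=.
  apply/andP; split; last by [].
  have : 'C(y, i) <= r by rewrite Hsum big_ord_recl /= subn0 leq_addr.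
  move=> Hy; rewrite ltnNge; apply/negP => xy.
  have := leq_bin2l i xy; lia.
- move: sz0 Hlast; case: (s') => // y s'' _; by rewrite /=.
rewrite big_ord_recl /= subn0.
have -> : \sum_(k < size s') 'C(nth 0 (x0 :: s') (lift ord0 k), i.+1 - lift ord0 k) = r.
  by rewrite Hsum; apply: eq_bigr => k _; rewrite lift0 /= subSS.
rewrite /r; lia.
Qed.

Lemma card_lt N x : x <= N -> #|[set y : 'I_N | y < x]| = x.
Proof.
elim: x => [|x IH] H.
  by apply/eqP; rewrite cards_eq0; apply/eqP/setP => y; rewrite !inE.
have -> : [set y : 'I_N | y < x.+1] = (Ordinal H) |: [set y : 'I_N | y < x].
  apply/setP => y; rewrite !inE ltnS leq_eqVlt; congr (_ || _).
rewrite cardsU1 inE /= ltnn IH //; exact: ltnW.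
Qed.

Lemma count_B N x p (c : bool) : 0 < x -> x <= N.+1 -> 0 < p ->
  #|[set F : {set 'I_N.+1} | (F \subset [set y : 'I_N.+1 | y < x]) && (#|F| == p) && ((ord0 \in F) == c)]|
  = 'C(x.-1, p - c).
Proof.
move=> x0 xN p0.
set B := [set y : 'I_N.+1 | y < x].
have cB : #|B| = x by rewrite card_lt.
have B0 : ord0 \in B by rewrite inE.
have cB0 : #|B :\ ord0| = x.-1 by move: (cardsD1 ord0 B); rewrite B0 cB; lia.
have Hfalse : #|[set F : {set 'I_N.+1} | (F \subset B) && (#|F| == p) && ((ord0 \in F) == false)]| = 'C(x.-1, p).
  rewrite -cB0 -cards_draws; apply: eq_card => F; rewrite !inE.
  rewrite eqbF_neg subsetD1 andbAC; by [].
case: c; last by rewrite subn0.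
set S := [set F : {set 'I_N.+1} | F \subset B & #|F| == p].
have cS : #|S| = 'C(x, p) by rewrite cards_draws cB.
have := cardsID [set F : {set 'I_N.+1} | ord0 \in F] S.
have -> : S :\: [set F : {set 'I_N.+1} | ord0 \in F] = [set F : {set 'I_N.+1} | (F \subset B) && (#|F| == p) && ((ord0 \in F) == false)].
  by apply/setP => F; rewrite !inE eqbF_neg andbC.
rewrite Hfalse cS.
have -> : S :&: [set F : {set 'I_N.+1} | ord0 \in F] = [set F : {set 'I_N.+1} | (F \subset B) && (#|F| == p) && ((ord0 \in F) == true)].
  by apply/setP => F; rewrite !inE eqb_id andbC.
have E : 'C(x, p) = 'C(x.-1, p) + 'C(x.-1, p - true).
  move: x0 p0; clear; case: x => // x _; case: p => // p _.
  by rewrite binS /= subn1 /=.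
rewrite E; lia.
Qed.

Lemma count_main N (s : seq nat) (p : nat) (c : bool) : Valid p s -> all (fun x => x < N.+1) s ->
  #|[set F : {set 'I_N.+1} | (#|F| == p) && (rk 0 F < rkp p s) && ((ord0 \in F) == c)]|
  = \sum_(k < size s) 'C((nth 0 s k).-1, p - k - c).
Proof.
elim: s p => [|x s IH] p HV Hall.
  rewrite big_ord0; apply/eqP; rewrite cards_eq0; apply/eqP/setP => F.
  by rewrite !inE rkp_nil ltn0 andbF.
rewrite big_ord_recl /= subn0.
have -> : \sum_(i < size s) 'C((nth 0 (x :: s) (lift ord0 i)).-1, p - lift ord0 i - c)
   = \sum_(k < size s) 'C((nth 0 s k).-1, p.-1 - k - c).
  apply: eq_bigr => k _; rewrite /= /bump leq0n /=; congr 'C(_, _).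
  move: (nat_of_ord k) => j; lia.
move: Hall => /= /andP[xN Hall].
have p0 := Valid_p HV.
have x0 : 0 < x by apply: (Valid_pos HV); rewrite inE eqxx.
have HV' := Valid_tail HV.
have TB := Valid_TB HV.
rewrite -(IH _ HV' Hall).
set R := rkp p.-1 s.
set X := [set F : {set 'I_N.+1} | (#|F| == p) && (rk 0 F < rkp p (x :: s)) && ((ord0 \in F) == c)].
set Y := [set F : {set 'I_N.+1} | (#|F| == p.-1) && (rk 0 F < R) && ((ord0 \in F) == c)].
pose xo : 'I_N.+1 := Ordinal xN.
have xo0 : xo != ord0 by rewrite -val_eqE /= -lt0n.
have Hbig : forall F : {set 'I_N.+1}, #|F| = p -> rk 0 F < 'C(x, p) + R -> forall y, y \in F -> y <= x.
  move=> F HF Hrk y yF; apply: (@rk_elems _ F x.+1) => //.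
  rewrite HF; move: Hrk TB; have -> : p = (p.-1).+1 by lia.
  rewrite binS /=; lia.
rewrite addnC -(cardsID [set F : {set 'I_N.+1} | xo \in F] X).
congr (_ + _); last first.
  rewrite -(@count_B N x p c x0 (ltnW xN) p0); apply: eq_card => F; rewrite !inE rkp_cons -/R.
  apply/idP/idP.
    case/and3P=> Hxo /andP[/eqP HF Hrk] Hc; rewrite Hc HF eqxx !andbT.
    apply/subsetP => y yF; rewrite inE ltn_neqAle (Hbig F HF Hrk y yF) andbT.
    apply/negP => /eqP yx; move: Hxo; have -> : xo = y by apply: val_inj.
    by rewrite yF.
  case/andP=> /andP[/subsetP Hs /eqP HF] Hc; rewrite Hc HF eqxx !andbT /=.
  apply/andP; split; last first.
    have H1 : forall y, y \in F -> y < x by move=> y yF; move: (Hs y yF); rewrite inE.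
    apply: leq_trans (@rk_lt _ 0 F x H1 (fun y _ => leq0n _) (leq0n _)) _.
    by rewrite HF addn0 leq_addr.
  by apply/negP => /Hs; rewrite inE /= ltnn.
have nY : forall G, G \in Y -> xo \notin G.
  move=> G; rewrite !inE => /andP[/andP[/eqP HG HR] _]; apply/negP => /(@rk_elems _ G x) H.
  have : x < x by apply: H; rewrite HG; lia.
  by rewrite ltnn.
have Hinj : {in Y &, injective (fun G => xo |: G)}.
  move=> G1 G2 Y1 Y2 E.
  by rewrite -(setU1K (nY _ Y1)) -(setU1K (nY _ Y2)) E.
rewrite -(card_in_imset Hinj); apply: eq_card => F.
rewrite inE; apply/idP/imsetP.
  rewrite !inE => /andP[/andP[/andP[/eqP HF Hrk] Hc] xF].
  rewrite rkp_cons -/R in Hrk.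
  have Hm : forall y, y \in F -> y <= xo by move=> y yF; exact: (Hbig F HF Hrk y yF).
  exists (F :\ xo); last by rewrite setD1K.
  rewrite !inE; apply/andP; split; first (apply/andP; split).
  - by apply/eqP; move: (cardsD1 xo F); rewrite xF HF /= => ->.
  - by move: Hrk; rewrite (rk_max 0 xF Hm) HF addn0 ltn_add2l.
  by rewrite eq_sym in xo0; rewrite xo0.
case=> G YG ->.
have nG := nY _ YG.
move: YG; rewrite !inE => /andP[/andP[/eqP HG HR] Hc].
have xF : xo \in xo |: G by rewrite !inE eqxx.
have Hm : forall y, y \in xo |: G -> y <= xo.
  move=> y; rewrite !inE => /orP[/eqP -> //|yG].
  apply: ltnW; apply: (@rk_elems _ G x) => //; rewrite HG; lia.
have HF : #|xo |: G| = p by rewrite cardsU1 nG HG; lia.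
rewrite eqxx andbT HF eqxx /= rkp_cons -/R (rk_max 0 xF Hm) HF addn0 (setU1K nG) ltn_add2l HR /=.
by rewrite eq_sym in xo0; rewrite (negbTE xo0).
Qed.

Lemma pos_of N (T : {set 'I_N.+1}) : ord0 \notin T -> forall y, y \in T -> 0 < y.
Proof.
move=> T0 y yT; rewrite lt0n; apply/negP => /eqP y0.
have : y = ord0 by apply: val_inj.
by move=> E; move: yT; rewrite E (negbTE T0).
Qed.

Theorem proposition3p5 :
  (forall (d : nat) (a g h : nat -> nat),
      pos_coeffs d a -> real_rooted (fpoly d a) -> rec_decomp d a g h ->
      forall i, 1 <= i <= d.-1 -> h i <= g i) ->
  forall (d : nat) (a : nat -> nat),
    pos_coeffs d a -> real_rooted (fpoly d a) -> is_f_polynomial d a.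
Proof.
move=> Hyp d a [a0 apos] Hreal.
pose s := fun i => sval (exp_ex i (a i)).
have Hs : forall i, 1 <= i <= d -> binom_exp i (a i) (s i).
  move=> i Hi; case/andP: (Hi) => i1 _.
  exact: (svalP (exp_ex i (a i)) i1 (apos i Hi)).
have HV : forall i, 1 <= i <= d -> Valid i (s i).
  by move=> i /Hs [/andP[_ H1] H2 H3 _]; split.
have Ha : forall i, 1 <= i <= d -> a i = rkp i (s i).
  by move=> i /Hs [_ _ _ ->].
pose g := fun i => if i is 0 then 1 else gpart i (s i).
pose h := fun j => if j is 0 then 1 else hpart j.+1 (s j.+1).
have h1 : 1 <= d -> hpart 1 (s 1) = 1.
  move=> d1; have [/andP[H0 H1] _ _ _] := Hs 1 d1.
  have sz : size (s 1) = 1 by lia.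
  by rewrite /hpart sz big_ord1 /= bin0.
have Hrec : rec_decomp d a g h.
  split => //; split => //.
  move=> i Hi; exists (s i); split; first exact: Hs.
  - by case: i Hi.
  case: i Hi => [|[|j]] //= Hi.
  by rewrite h1 //; case/andP: Hi.
have HH := Hyp d a g h (conj a0 apos) Hreal Hrec.
have HHk : forall k, 1 <= k -> k < d -> hpart k.+1 (s k.+1) <= gpart k (s k).
  move=> k k1 kd; have := HH k; rewrite k1 /=.
  case: k k1 kd => [|k] //= _ kd; apply; lia.
pose N := \max_(i < d.+1) \max_(x <- s i) x.
have HN : forall i, i <= d -> all (fun x => x < N.+1) (s i).
  move=> i iled; apply/allP => x xs; rewrite ltnS.
  apply: leq_trans (@leq_bigmax_seq nat (s i) xpredT (fun y => y) x xs isT) _.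
  exact: (@leq_bigmax _ (fun j : 'I_d.+1 => \max_(x <- s j) x) (Ordinal (iled : i < d.+1))).
have Core : forall k (T : {set 'I_N.+1}), 1 <= k -> k < d -> ord0 \notin T -> #|T| = k ->
    rk 1 T < a k.+1 -> rk 0 T < a k.
  move=> k T k1 kd T0 Tk HT; rewrite ltnNge; apply/negP => Hge.
  have kd' : 1 <= k <= d by rewrite k1; lia.
  have kd'' : 1 <= k.+1 <= d by lia.
  pose I1 := [set U : {set 'I_N.+1} | (ord0 \notin U) && (#|U| == k) && (rk 1 U < a k.+1)].
  pose I2 := [set U : {set 'I_N.+1} | (ord0 \notin U) && (#|U| == k) && (rk 0 U < a k)].
  have sub : I2 \proper I1.
    apply/properP; split.
      apply/subsetP => U; rewrite !inE => /andP[/andP[U0 /eqP Uk] HU].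
      rewrite U0 Uk eqxx /=; apply: leq_ltn_trans HT.
      rewrite leqNgt; apply/negP => lt.
      have := rk_cmp Uk Tk (pos_of U0) (pos_of T0) lt.
      move: HU Hge; lia.
    exists T; rewrite !inE T0 Tk eqxx //= -leqNgt //.
  have c2 : #|I2| = gpart k (s k).
    rewrite /gpart.
    have -> : \sum_(j < size (s k)) 'C((nth 0 (s k) j).-1, k - j)
      = \sum_(j < size (s k)) 'C((nth 0 (s k) j).-1, k - j - false).
      by apply: eq_bigr => j _; rewrite subn0.
    rewrite -(count_main false (HV k kd') (HN k (ltnW kd))) -Ha //.
    apply: eq_card => U; rewrite !inE.
    by case: (ord0 \in U) => /=; rewrite ?andbT ?andbF.
  have c1 : #|I1| = hpart k.+1 (s k.+1).
    rewrite /hpart.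
    have -> : \sum_(j < size (s k.+1)) 'C((nth 0 (s k.+1) j).-1, (k.+1 - j).-1)
      = \sum_(j < size (s k.+1)) 'C((nth 0 (s k.+1) j).-1, k.+1 - j - true).
      by apply: eq_bigr => j _; rewrite subn1.
    rewrite -(count_main true (HV k.+1 kd'') (HN k.+1 kd)) -Ha //.
    have Hinj : {in I1 &, injective (fun U => ord0 |: U)}.
      move=> U1 U2; rewrite !inE => /andP[/andP[n1 _] _] /andP[/andP[n2 _] _] E.
      by rewrite -(setU1K n1) -(setU1K n2) E.
    rewrite -(card_in_imset Hinj); apply: eq_card => F.
    rewrite inE; apply/imsetP/idP.
      case=> U; rewrite !inE => /andP[/andP[U0 /eqP Uk] HU] ->.
      by rewrite cardsU1 U0 Uk rk_add0 // HU eqxx /= !inE eqxx.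
    move=> /andP[/andP[/eqP Fk HF] F0].
    move/eqP: F0 => F0.
    exists (F :\ ord0); last by rewrite setD1K.
    have n0 : ord0 \notin F :\ ord0 by rewrite !inE eqxx.
    rewrite !inE eqxx /=.
    have Fk' : #|F :\ ord0| = k by move: (cardsD1 ord0 F); rewrite F0 Fk /= => -[].
    by rewrite Fk' eqxx /= -rk_add0 // setD1K.
  have := proper_card sub; rewrite c1 c2.
  have := HHk k k1 kd; lia.
pose D := [set F : {set 'I_N.+1} | (#|F| <= d) && (rk 0 F < a #|F|)].
have Step : forall F x, F \in D -> x \in F -> F :\ x \in D.
  move=> F x; rewrite !inE => /andP[Fd HF] xF.
  have Fk : #|F| = #|F :\ x|.+1 by move: (cardsD1 x F); rewrite xF /= => ->.
  rewrite Fk in Fd HF; set k := #|F :\ x| in Fd HF Fk *.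
  rewrite (ltnW Fd) /=.
  case: (posnP k) => [k0|k1].
    have -> : F :\ x = set0 by apply/eqP; rewrite -cards_eq0 -/k k0.
    by rewrite rk0set k0 a0.
  have kd : k < d by [].
  case: (boolP (ord0 \in F)) => F0.
    set T := F :\ ord0.
    have T0 : ord0 \notin T by rewrite !inE eqxx.
    have Tk : #|T| = k by move: (cardsD1 ord0 F); rewrite F0 Fk /= => -[].
    have HT : rk 0 T < a k.
      apply: Core => //; rewrite -rk_add0 // /T setD1K // Fk; exact: HF.
    case: (eqVneq x ord0) => [->|xn0]; first by [].
    have xT : x \in T by rewrite !inE xn0.
    have -> : F :\ x = ord0 |: (T :\ x).
      apply/setP => y; rewrite !inE.
      case: (eqVneq y ord0) => [->|yn0] /=; first by rewrite eq_sym xn0.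
      by rewrite andbC.
    have T0' : ord0 \notin T :\ x by rewrite !inE eqxx andbF.
    rewrite rk_add0 //.
    apply: leq_ltn_trans HT; exact: rk_del (pos_of T0) xT.
  have T0 : ord0 \notin F :\ x by rewrite !inE (negbTE F0) andbF.
  apply: Core => //.
  apply: leq_ltn_trans HF; exact: rk_del (pos_of F0) xF.
have Clos : forall F G : {set 'I_N.+1}, F \in D -> G \subset F -> G \in D.
  move=> F; move Hk: #|F| => k; elim: k F Hk => [|k IH] F Hk G FD GF.
    move/eqP: Hk; rewrite cards_eq0 => /eqP HF; move: GF; rewrite HF subset0 => /eqP ->.
    by move: FD; rewrite HF.
  case: (eqVneq G F) => [-> //|GnF].
  have : G \proper F by rewrite properEneq GnF.
  case/properP => _ [x xF xG].
  apply: (IH (F :\ x)).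
  - by move: (cardsD1 x F); rewrite xF Hk /= => -[].
  - exact: Step.
  apply/subsetP => y yG; rewrite !inE (subsetP GF y yG) andbT.
  by apply/negP => /eqP E; move: xG; rewrite -E yG.
exists N.+1, D; split.
  split; last by move=> F G FD GF; exact: (Clos F G FD GF).
  by rewrite !inE cards0 rk0set a0.
move=> k.
case: (leqP k d) => kd; last first.
  apply/eqP; rewrite cards_eq0; apply/eqP/setP => F; rewrite !inE.
  apply/negP => /andP[/andP[Fd _] /eqP Fk]; move: Fd; rewrite Fk; lia.
have -> : [set F in D | #|F| == k] = [set F : {set 'I_N.+1} | (#|F| == k) && (rk 0 F < a k)].
  apply/setP => F; rewrite !inE.
  have [Fk|Fk] := eqVneq #|F| k; first by rewrite Fk kd andbT.
  by rewrite andbF.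
case: (posnP k) => [->|k1].
  rewrite a0.
  have -> : [set F : {set 'I_N.+1} | (#|F| == 0) && (rk 0 F < 1)] = [set set0].
    apply/setP => F; rewrite !inE cards_eq0.
    case: (eqVneq F set0) => [->|] //=; by rewrite rk0set.
  by rewrite cards1.
have kd' : 1 <= k <= d by rewrite k1.
rewrite -(cardsID [set F : {set 'I_N.+1} | ord0 \in F]).
have -> : [set F : {set 'I_N.+1} | (#|F| == k) && (rk 0 F < a k)] :&: [set F : {set 'I_N.+1} | ord0 \in F]
   = [set F : {set 'I_N.+1} | (#|F| == k) && (rk 0 F < rkp k (s k)) && ((ord0 \in F) == true)].
  by apply/setP => F; rewrite !inE -Ha // eqb_id andbC.
have -> : [set F : {set 'I_N.+1} | (#|F| == k) && (rk 0 F < a k)] :\: [set F : {set 'I_N.+1} | ord0 \in F]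
   = [set F : {set 'I_N.+1} | (#|F| == k) && (rk 0 F < rkp k (s k)) && ((ord0 \in F) == false)].
  by apply/setP => F; rewrite !inE -Ha // eqbF_neg andbC.
rewrite !count_main //; try exact: HV; try exact: HN.
rewrite -big_split Ha //; apply: eq_bigr => j _.
have HVk := HV k kd'.
have jlt : j < size (s k) by [].
have xpos : 0 < nth 0 (s k) j by apply: (Valid_pos HVk); exact: mem_nth.
have jk : j < k by case: HVk => _ Hsz _; lia.
have E : forall x q, 0 < x -> 0 < q -> 'C(x.-1, q - true) + 'C(x.-1, q - false) = 'C(x, q).
  move=> [|x] [|q] // _ _; by rewrite binS /= subn1 subn0 /= addnC.
rewrite -[_ - j - true]subnDA -[_ - j - false]subnDA !subnDA.
apply: E => //; lia.
Qed.
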